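(* Let $I$ be a finite set of positive integers. Then there are real numbers $c_k$, $k\in I\cup\{0\}$, such that $$d(I;z)=c_0+\sum_{k\in I}c_k\, z^{\underline{k}},$$ and $\frac{1}{k!}\le |c_k|\le 1$ for every $k\in I\cup\{0\}$.
   Context: $z^{\underline{k}}=z(z-1)\cdots(z-k+1)$ is the falling factorial ($z^{\underline 0}=1$). $d(I;z)$ is the descent polynomial: the unique polynomial whose value at each integer $n>\max(I\cup\{0\})$ is the number of permutations $\pi\in\mathfrak S_n$ with $\{j\mid\pi_j>\pi_{j+1}\}=I$. *)

(* Defs.v *)
From HB Require Import structures.
From mathcomp Require Import all_boot all_order all_algebra all_fingroup.
Set Implicit Arguments. Unset Strict Implicit. Unset Printing Implicit Defensive.
Import Order.TTheory GRing.Theory Num.Theory.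
Local Open Scope ring_scope.

(* Position j (1-indexed, 1 <= j <= n-1) is a descent of s : 'S_n, i.e.
   pi_j > pi_{j+1}, where pi_j := s (j-1) (0-indexed permutation on 'I_n). *)
Definition is_desc (n : nat) (s : 'S_n) (j : nat) : bool :=
  [exists i : 'I_n, [exists k : 'I_n,
     [&& i.+1 == j, val k == j & (val (s k) < val (s i))%N]]].

(* number of permutations of S_n whose descent set is exactly I
   (descent positions always lie in 1..n-1, so quantifying over j < n suffices
    when max I < n) *)
Definition descent_count (I : seq nat) (n : nat) : nat :=
  #|[set s : 'S_n | [forall j : 'I_n, (val j \in I) == is_desc s j]]|.

Definition falling (R : nzRingType) (k : nat) : {poly R} :=
  \prod_(i < k) ('X - (i%:R)%:P).

Definition is_descent_poly (R : nzRingType) (I : seq nat) (p : {poly R}) : Prop :=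
  forall n : nat, (\max_(i <- I) i < n)%N -> p.[n%:R] = (descent_count I n)%:R.

(* Main.v *)
Require Import Defs.
From HB Require Import structures.
From mathcomp Require Import all_boot all_order all_algebra all_fingroup zify.
Import Order.TTheory GRing.Theory Num.Theory.
Set Implicit Arguments. Unset Strict Implicit. Unset Printing Implicit Defensive.

Lemma card_lt_ord n t : t <= n -> #|[set x : 'I_n | x < t]| = t.
Proof.
move=> htn.
have -> : [set x : 'I_n | x < t] = [set widen_ord htn y | y : 'I_t].
  apply/setP => x; rewrite !inE; apply/idP/imsetP.
    by move=> xt; exists (Ordinal xt) => //; apply: val_inj.
  by case=> y _ ->; rewrite /= ltn_ord.
rewrite card_imset ?card_ord //.
by move=> a b /(congr1 val) /= h; apply: val_inj.
Qed.

Lemma card_range_ord n a b : b <= n -> #|[set x : 'I_n | a <= x < b]| = b - a.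
Proof.
move=> hbn.
have -> : [set x : 'I_n | a <= x < b] = [set x : 'I_n | x < b] :\: [set x : 'I_n | x < a].
  by apply/setP => x; rewrite !inE -leqNgt andbC.
rewrite cardsD card_lt_ord //.
case: (leqP a b) => hab.
  have -> : [set x : 'I_n | x < b] :&: [set x : 'I_n | x < a] = [set x : 'I_n | x < a].
    apply/setP => x; rewrite !inE; apply/andP/idP => [[]//|h]; split=> //.
    exact: leq_trans h hab.
  by rewrite card_lt_ord // (leq_trans hab).
have -> : [set x : 'I_n | x < b] :&: [set x : 'I_n | x < a] = [set x : 'I_n | x < b].
  apply/setP => x; rewrite !inE; apply/andP/idP => [[]//|h]; split=> //.
  exact: ltn_trans h hab.
by rewrite card_lt_ord // subnn; apply/esym/eqP; rewrite subn_eq0 ltnW.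
Qed.

Lemma ltI_trans n : transitive (fun x y : 'I_n => x < y).
Proof. by move=> x y z; apply: ltn_trans. Qed.

Lemma sorted_enum_set n (B : {set 'I_n}) :
  sorted (fun x y : 'I_n => x < y) (enum B).
Proof.
rewrite /enum_mem; apply: sorted_filter; first by move=> x y z; apply: ltn_trans.
rewrite -enumT; have := iota_ltn_sorted 0 n; rewrite -val_enum_ord sorted_map.
by [].
Qed.

Lemma index_sorted n (s : seq 'I_n) x : sorted (fun x y : 'I_n => x < y) s ->
  x \in s -> index x s = count (fun y : 'I_n => y < x) s.
Proof.
elim: s => [//|a s IH] /= hs.
have hs' : sorted (fun x y : 'I_n => x < y) s by exact: path_sorted hs.
have hall : all (fun y : 'I_n => a < y) s.
  by move: hs; rewrite (path_sortedE (@ltI_trans n)) => /andP[].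
rewrite inE; case: (eqVneq a x) => [eax|hax] /= hx.
  subst a.
  rewrite ltnn add0n; apply/esym/eqP; rewrite -leqn0 leqNgt -has_count.
  by apply/hasP => [[y ys]]; move: (allP hall y ys) => h1 h2; move: (ltn_trans h1 h2); rewrite ltnn.
by rewrite IH // (allP hall x hx).
Qed.

Lemma count_enum_set n (B : {set 'I_n}) (P : pred 'I_n) :
  count P (enum B) = #|[set y in B | P y]|.
Proof.
rewrite cardE /enum_mem count_filter size_filter; apply: eq_count => y.
by rewrite !inE andbC.
Qed.

Lemma nth_sorted_ltE n (s : seq 'I_n) x0 a b : sorted (fun x y : 'I_n => x < y) s ->
  a < size s -> b < size s -> (nth x0 s a < nth x0 s b) = (a < b).
Proof.
move=> hs ha hb.
have hom := sorted_ltn_nth (@ltI_trans n) x0 hs.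
case: (ltngtP a b) => h.
- exact: hom.
- apply/negbTE; rewrite -leqNgt ltnW //; exact: hom.
- by rewrite h ltnn.
Qed.

Lemma is_desc_ord n (s : 'S_n) (i k : 'I_n) : val k = i.+1 -> is_desc s k = (s k < s i).
Proof.
move=> hk; apply/existsP/idP.
  case=> i' /existsP [k' /and3P [/eqP hi /eqP hk' hlt]].
  have e1 : k' = k by apply: val_inj; rewrite hk'.
  have e2 : i' = i by apply: val_inj; apply: succn_inj; rewrite hi hk.
  by rewrite -e1 -e2.
move=> h; exists i; apply/existsP; exists k; apply/and3P; split; [by rewrite hk | by [] | exact: h].
Qed.

Lemma is_desc0 n (s : 'S_n) : is_desc s 0 = false.
Proof. by apply/existsP => [[i /existsP [k /and3P [/eqP]]]]. Qed.

Lemma is_desc_big n (s : 'S_n) j : n <= j -> is_desc s j = false.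
Proof.
move=> hj; apply/existsP => [[i /existsP [k /and3P [_ /eqP hk _]]]].
by move: (ltn_ord k); rewrite hk ltnNge hj.
Qed.

Definition rk m (g : 'I_m -> nat) (k : 'I_m) := #|[set j | g j < g k]|.

Lemma rk_lt m (g : 'I_m -> nat) k : rk g k < m.
Proof.
rewrite /rk -[X in _ < X]card_ord -cardsT; apply: proper_card.
rewrite properT; apply/eqP => h.
by have := in_setT k; rewrite -h inE ltnn.
Qed.

Lemma rk_ltE m (g : 'I_m -> nat) k k' : (rk g k < rk g k') = (g k < g k').
Proof.
case: (ltnP (g k) (g k')) => h.
  apply: proper_card; apply/properP; split.
    by apply/subsetP => j; rewrite !inE => hj; exact: ltn_trans hj h.
  by exists k; rewrite !inE ?ltnn.
apply/negbTE; rewrite -leqNgt; apply: subset_leq_card.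
by apply/subsetP => j; rewrite !inE => hj; exact: leq_trans hj h.
Qed.

Lemma rk_perm m (t : 'S_m) k : rk (fun j => val (t j)) k = t k.
Proof.
rewrite /rk.
have -> : [set j | t j < t k] = t^-1%g @: [set x : 'I_m | x < t k].
  apply/setP => j; rewrite inE; apply/idP/imsetP.
    by move=> h; exists (t j); rewrite ?inE // permK.
  by case=> x; rewrite inE => hx ->; rewrite permKV.
rewrite card_imset; [exact: card_lt_ord (ltnW (ltn_ord _)) | exact: perm_inj].
Qed.

Section Cons.
Variables (n m : nat) (hmn : m <= n).

Definition wid (k : 'I_m) : 'I_n := widen_ord hmn k.

Lemma wid_inj : injective wid.
Proof. by move=> a b /(congr1 val) /= h; apply: val_inj. Qed.

Definition stdg (s : 'S_n) (k : 'I_m) : 'I_m :=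
  Ordinal (rk_lt (fun j => val (s (wid j))) k).

Lemma stdg_inj s : injective (stdg s).
Proof.
move=> a b /(congr1 val) /= h.
apply: wid_inj; apply: (@perm_inj _ s); apply: val_inj.
case: (ltngtP (s (wid a)) (s (wid b))) => // hab.
  by move: hab; rewrite -(rk_ltE (fun j => val (s (wid j)))) h ltnn.
by move: hab; rewrite -(rk_ltE (fun j => val (s (wid j)))) h ltnn.
Qed.

Definition std s : 'S_m := perm (@stdg_inj s).

Definition Aset (s : 'S_n) : {set 'I_n} := [set s (wid k) | k : 'I_m].

Lemma card_Aset s : #|Aset s| = m.
Proof.
rewrite card_imset ?card_ord //.
by move=> a b /perm_inj /wid_inj.
Qed.

Lemma std_desc s j : j < m -> is_desc (std s) j = is_desc s j.
Proof.
case: j => [|j] hj; first by rewrite !is_desc0.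
have hj' : j < m by exact: ltnW.
rewrite (@is_desc_ord _ _ (Ordinal hj') (Ordinal hj)) //.
rewrite (@is_desc_ord _ _ (wid (Ordinal hj')) (wid (Ordinal hj))) //.
by rewrite !permE /= rk_ltE.
Qed.

Section CF.
Variables (A : {set 'I_n}) (t : 'S_m).

Definition tn (k : nat) : nat := if (insub k : option 'I_m) is Some k' then val (t k') else 0.

Lemma tnE i (h : i < m) : tn i = t (Ordinal h).
Proof. by rewrite /tn insubT. Qed.

Definition cf (i : 'I_n) : 'I_n :=
  if i < m then nth i (enum A) (tn i) else nth i (enum (~: A)) (i - m).

Hypothesis hA : #|A| = m.

Lemma size_enumA : size (enum A) = m.
Proof. by rewrite -cardE. Qed.

Lemma size_enumC : size (enum (~: A)) = n - m.
Proof. have h := cardsC A; rewrite card_ord hA cardE in h; lia. Qed.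

Lemma cf_in (i : 'I_n) : i < m -> cf i \in A.
Proof.
move=> h; rewrite /cf h -mem_enum; apply: mem_nth.
by rewrite size_enumA (tnE h) ltn_ord.
Qed.

Lemma cf_notin (i : 'I_n) : m <= i -> cf i \notin A.
Proof.
move=> h; rewrite /cf ltnNge h /=.
have : nth i (enum (~: A)) (i - m) \in ~: A.
  by rewrite -mem_enum; apply: mem_nth; rewrite size_enumC ltn_sub2r // (leq_ltn_trans h).
by rewrite inE.
Qed.

Lemma cf_inj : injective cf.
Proof.
move=> a b.
case: (ltnP a m) => ha; case: (ltnP b m) => hb.
- rewrite /cf ha hb (tnE ha) (tnE hb) (set_nth_default a b) ?size_enumA ?ltn_ord // => /eqP.
  rewrite nth_uniq ?enum_uniq ?size_enumA ?ltn_ord // => /eqP/val_inj/perm_inj [] h.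
  exact: val_inj.
- by move=> h; move: (cf_in ha) (cf_notin hb); rewrite h => ->.
- by move=> h; move: (cf_in hb) (cf_notin ha); rewrite h => ->.
- rewrite /cf ltnNge ha ltnNge hb /= (set_nth_default a b) ?size_enumC ?ltn_sub2r ?(leq_ltn_trans hb) // => /eqP.
  rewrite nth_uniq ?enum_uniq ?size_enumC ?ltn_sub2r ?(leq_ltn_trans ha) ?(leq_ltn_trans hb) //.
  move=> /eqP h; apply: val_inj; rewrite /=; lia.
Qed.
End CF.

Definition cp (A : {set 'I_n}) (t : 'S_m) : 'S_n :=
  match (#|A| =P m) with ReflectT h => perm (@cf_inj A t h) | ReflectF _ => 1%g end.

Lemma cpE (A : {set 'I_n}) (t : 'S_m) i : #|A| = m -> cp A t i = cf A t i.
Proof. by rewrite /cp; case: eqP => // h _; rewrite permE. Qed.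

End Cons.

Section WithJ.
Variables (n m : nat) (hmn : m <= n).
Variable J : seq nat.
Hypothesis hJ : forall j, j \in J -> j < m.

Definition Eset : {set 'S_n} :=
  [set s | [forall j : 'I_n, (val j != m) ==> ((val j \in J) == is_desc s j)]].
Definition Dset k : {set 'S_k} :=
  [set s : 'S_k | [forall j : 'I_k, (val j \in J) == is_desc s j]].

Section CP.
Variables (A : {set 'I_n}) (t : 'S_m) (hA : #|A| = m).

Lemma cfL x0 (i : 'I_n) (h : i < m) : cf A t i = nth x0 (enum A) (t (Ordinal h)).
Proof.
by rewrite /cf h (tnE t h) (set_nth_default x0) // (size_enumA hA).
Qed.

Lemma cfR x0 (i : 'I_n) (h : m <= i) : cf A t i = nth x0 (enum (~: A)) (i - m).
Proof.
rewrite /cf ltnNge h /= (set_nth_default x0) // (size_enumC hmn hA).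
by rewrite ltn_sub2r // (leq_ltn_trans h).
Qed.

Lemma cp_desc_lt j : j < m -> is_desc (cp hmn A t) j = is_desc t j.
Proof.
case: j => [|j] hj; first by rewrite !is_desc0.
have hj' : j < m by exact: ltnW.
have hjn : j.+1 < n by exact: leq_trans hj hmn.
have hjn' : j < n by exact: ltnW.
rewrite (@is_desc_ord _ _ (Ordinal hj') (Ordinal hj)) //.
rewrite (@is_desc_ord _ _ (Ordinal hjn') (Ordinal hjn)) //.
rewrite !cpE // (@cfL (Ordinal hjn') (Ordinal hjn) hj) (@cfL (Ordinal hjn') (Ordinal hjn') hj').
by rewrite nth_sorted_ltE ?sorted_enum_set ?(size_enumA hA) ?ltn_ord.
Qed.

Lemma cp_desc_gt j : m < j -> is_desc (cp hmn A t) j = false.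
Proof.
move=> hj; case: (leqP n j) => hjn; first by rewrite is_desc_big.
destruct j as [|j]; first by [].
have hjn' : j < n by exact: ltnW.
rewrite (@is_desc_ord _ _ (Ordinal hjn') (Ordinal hjn)) //.
rewrite !cpE // (@cfR (Ordinal hjn') (Ordinal hjn) (ltnW hj)) (@cfR (Ordinal hjn') (Ordinal hjn') hj).
rewrite nth_sorted_ltE ?sorted_enum_set ?(size_enumC hmn hA) /=.
all: lia.
Qed.

Lemma cp_E : t \in Dset m -> cp hmn A t \in Eset.
Proof.
rewrite !inE => /forallP ht; apply/forallP => j; apply/implyP => hjm.
case: (ltngtP j m) => hj.
- rewrite cp_desc_lt //; exact: (ht (Ordinal hj)).
- rewrite cp_desc_gt //; apply/eqP/negbTE/negP => /hJ.
  by rewrite ltnNge ltnW.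
- by move: hjm => /eqP; rewrite hj.
Qed.

Lemma cp_Aset : Aset hmn (cp hmn A t) = A.
Proof.
apply/eqP; rewrite eqEcard card_Aset hA leqnn andbT.
apply/subsetP => x /imsetP [k _ ->].
by rewrite cpE // cf_in //= ltn_ord.
Qed.

Lemma cp_std : std hmn (cp hmn A t) = t.
Proof.
apply/permP => k; apply: val_inj; rewrite permE /= /rk.
have -> : [set j : 'I_m | cp hmn A t (wid hmn j) < cp hmn A t (wid hmn k)] =
          [set j | t j < t k].
  apply/setP => j; rewrite !inE !cpE //.
  have hj : wid hmn j < m by rewrite /= ltn_ord.
  have hk : wid hmn k < m by rewrite /= ltn_ord.
  rewrite (@cfL (wid hmn j) _ hj) (@cfL (wid hmn j) _ hk).
  rewrite nth_sorted_ltE ?sorted_enum_set ?(size_enumA hA) ?ltn_ord //.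
  by congr (val (t _) < val (t _)); apply: val_inj.
exact: (rk_perm t k).
Qed.
End CP.

Section E.
Variable s : 'S_n.
Hypothesis hs : s \in Eset.

Lemma E_step (p i' : 'I_n) : val i' = p.+1 -> m <= p -> s p < s i'.
Proof.
move=> hi hp.
move: hs; rewrite inE => /forallP /(_ i') /implyP.
have hne : val i' != m by rewrite hi; apply/eqP => e; move: hp; rewrite -e ltnn.
move=> /(_ hne).
have -> : (val i' \in J) = false.
  by apply/negbTE/negP => /hJ; rewrite hi ltnNge ltnW.
rewrite (is_desc_ord _ hi) eq_sym eqbF_neg -leqNgt leq_eqVlt => /orP [/eqP e|//].
have : i' = p by apply: (@perm_inj _ s); apply: val_inj.
by move=> e'; move: hi; rewrite e' => /eqP; rewrite ltn_eqF.
Qed.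

Lemma E_mono (i i' : 'I_n) : m <= i -> i < i' -> s i < s i'.
Proof.
move=> hi; move: {2}(val i' - i.+1) (erefl (val i' - i.+1)) => d.
elim: d i' => [|d IH] i' hd hii'.
  apply: E_step => //; apply/eqP; rewrite eqn_leq hii' andbT; move: hd; lia.
have hp : (val i').-1 < n by exact: leq_ltn_trans (leq_pred _) (ltn_ord i').
apply: ltn_trans (IH (Ordinal hp) _ _) (E_step (p := Ordinal hp) _ _) => /=. all: move: hd hii'; rewrite -?subn1 /=; lia.
Qed.

Lemma E_std : std hmn s \in Dset m.
Proof.
rewrite inE; apply/forallP => j; rewrite std_desc ?ltn_ord //.
move: hs; rewrite inE => /forallP /(_ (wid hmn j)) /implyP; apply.
by rewrite /= neq_ltn ltn_ord.
Qed.

Lemma notin_Aset (i : 'I_n) : m <= i -> s i \notin Aset hmn s.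
Proof.
move=> hi; apply/imsetP => [[k _ /perm_inj e]].
by have := congr1 val e; rewrite /= => e'; move: (ltn_ord k) hi; rewrite e'; lia.
Qed.

Lemma E_inv : cp hmn (Aset hmn s) (std hmn s) = s.
Proof.
apply/permP => i; rewrite cpE ?card_Aset //.
case: (ltnP i m) => hi.
  rewrite (@cfL _ _ _ (s i) i hi) ?card_Aset // /std permE /= /rk.
  set k := Ordinal hi.
  have ik : wid hmn k = i by apply: val_inj.
  have hin : s i \in Aset hmn s by apply/imsetP; exists k; rewrite ?ik.
  rewrite -[X in _ = X](nth_index (s i) (s := enum (Aset hmn s))) ?mem_enum //.
  congr nth; rewrite index_sorted ?sorted_enum_set ?mem_enum // count_enum_set.
  have -> : [set y in Aset hmn s | y < s i] =
            (fun j => s (wid hmn j)) @: [set j | s (wid hmn j) < s (wid hmn k)].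
    apply/setP => y; rewrite !inE ik; apply/andP/imsetP.
      by case=> /imsetP [j _ ->] h; exists j; rewrite ?inE.
    by case=> j; rewrite inE => h ->; split => //; apply/imsetP; exists j.
  by rewrite card_imset // => a b /perm_inj /wid_inj.
rewrite (@cfR _ _ _ (s i) i hi) ?card_Aset //.
have hin : s i \in ~: Aset hmn s by rewrite inE notin_Aset.
rewrite -[X in _ = X](nth_index (s i) (s := enum (~: Aset hmn s))) ?mem_enum //.
congr nth; rewrite index_sorted ?sorted_enum_set ?mem_enum // count_enum_set.
have -> : [set y in ~: Aset hmn s | y < s i] = s @: [set j : 'I_n | m <= j < i].
  apply/setP => y; rewrite !inE; apply/andP/imsetP.
    case=> hy hyi; exists ((s^-1)%g y); last by rewrite permKV.
    rewrite inE; apply/andP; split.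
      rewrite leqNgt; apply/negP => hj; move: hy => /negP; apply.
      apply/imsetP; exists (Ordinal hj) => //; have -> : wid hmn (Ordinal hj) = (s^-1)%g y by apply: val_inj.
      by rewrite permKV.
    rewrite ltnNge; apply/negP; rewrite leq_eqVlt => /orP [/eqP e|h].
      by move: hyi; rewrite (_ : i = (s^-1)%g y) ?permKV ?ltnn //; apply: val_inj.
    by move: (E_mono hi h) hyi; rewrite permKV => h1 h2; move: (ltn_trans h1 h2); rewrite ltnn.
  case=> j; rewrite inE => /andP [h1 h2] ->; split.
    exact: notin_Aset.
  exact: E_mono.
rewrite card_imset; [exact: (esym (card_range_ord m (ltnW (ltn_ord i)))) | exact: perm_inj].
Qed.
End E.

Lemma card_E : #|Eset| = 'C(n, m) * #|Dset m|.
Proof.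
pose F (s : 'S_n) := (Aset hmn s, std hmn s).
have inj : {in Eset &, injective F}.
  move=> s1 s2 h1 h2 [e1 e2].
  by rewrite -(E_inv h1) -(E_inv h2) e1 e2.
rewrite -(card_in_imset inj).
have -> : F @: Eset = setX [set B : {set 'I_n} | #|B| == m] (Dset m).
  apply/setP => [[B t]]; rewrite in_setX [B \in _]inE /=; apply/imsetP/andP.
    case=> s hs [-> ->]; split; first by rewrite card_Aset.
    exact: E_std.
  case=> /eqP hB ht; exists (cp hmn B t); first exact: cp_E.
  by rewrite /F cp_Aset // cp_std.
by rewrite cardsX card_draws card_ord.
Qed.
End WithJ.

Lemma dcE (J : seq nat) k : descent_count J k = #|Dset J k|.
Proof. by []. Qed.

Lemma dc_nil n : descent_count [::] n = 1.
Proof.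
have hJ : forall j, j \in [::] -> j < 0 by [].
have := card_E (leq0n n) hJ; rewrite bin0 mul1n.
have -> : Dset [::] 0 = setT by apply/setP => s; rewrite !inE; apply/forallP => [[]].
rewrite cardsT card_Sn fact0 => <-; rewrite dcE; apply: eq_card => s; rewrite !inE; apply/forallP/forallP => h j.
  by apply/implyP => _; apply: h.
case: (eqVneq (val j) 0) => hj; last by move: (h j); rewrite hj.
by move: hj; case: j => [[|k] ?] //= _; rewrite is_desc0.
Qed.

Lemma dc_rec (I : seq nat) m n : uniq I -> m \in I -> (forall k, k \in I -> k <= m) ->
  m < n ->
  descent_count I n + descent_count (rem m I) n = 'C(n, m) * descent_count (rem m I) m.
Proof.
move=> hu hm hle hn.
have memJ j : (j \in rem m I) = (j != m) && (j \in I) by rewrite (mem_rem_uniq m hu).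
have hJ : forall j, j \in rem m I -> j < m.
  by move=> j; rewrite memJ => /andP [h1 h2]; rewrite ltn_neqAle h1 hle.
rewrite -(card_E (ltnW hn) hJ) -(cardsID [set s : 'S_n | is_desc s m] (Eset n m (rem m I))).
congr (_ + _); rewrite dcE; apply: eq_card => s; rewrite !inE.
- apply/forallP/andP.
    move=> h; split.
      apply/forallP => j; apply/implyP => hj; rewrite memJ hj; exact: h.
    by move: (h (Ordinal hn)) => /= /eqP <-.
  case=> /forallP h hd j; case: (eqVneq (val j) m) => hj.
    have -> : j = Ordinal hn by apply: val_inj.
    by rewrite /= hm hd.
  by move: (h j); rewrite hj memJ hj.
- apply/forallP/andP.
    move=> h; split.
      by move: (h (Ordinal hn)) => /= /eqP <-; rewrite memJ eqxx.
    by apply/forallP => j; apply/implyP => hj; exact: h.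
  case=> hd /forallP h j; case: (eqVneq (val j) m) => hj.
    have -> : j = Ordinal hn by apply: val_inj.
    by rewrite /= memJ eqxx /=; apply/eqP/esym/negbTE.
  by move: (h j); rewrite hj.
Qed.

Lemma dc_le (J : seq nat) m : descent_count J m <= m`!.
Proof. by rewrite dcE -card_Sn max_card. Qed.

Lemma dc_gt0 m (J : seq nat) : (forall j, j \in J -> 0 < j < m) -> 0 < descent_count J m.
Proof.
elim: m J => [|m IH] J hJ.
  rewrite dcE; apply/card_gt0P; exists 1%g; rewrite inE; apply/forallP => [[]] //.
pose J' := [seq j <- J | j != m].
have hJ' : forall j, j \in J' -> 0 < j < m.
  move=> j; rewrite mem_filter => /andP [h1 /hJ /andP [h2 h3]].
  by rewrite h2 /= ltn_neqAle h1 -ltnS.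
have hJ'' : forall j, j \in J' -> j < m by move=> j /hJ' /andP [].
have /card_gt0P [t ht] := IH J' hJ'.
have hmn : m <= m.+1 by [].
pose x0 : 'I_m.+1 := if m \in J then ord0 else ord_max.
pose A := [set~ x0].
have hA : #|A| = m by rewrite cardsC1 card_ord.
have hE := cp_E hmn hJ'' hA ht.
rewrite dcE; apply/card_gt0P; exists (cp hmn A t); rewrite inE; apply/forallP => j.
case: (eqVneq (val j) m) => hj; last first.
  move: hE; rewrite inE => /forallP /(_ j); rewrite hj /= mem_filter hj.
  done.
case: (posnP m) => hm0.
  have -> : j = ord0 by apply: val_inj; rewrite /= hj hm0.
  rewrite /= is_desc0; apply/eqP/negbTE/negP => /hJ.
  by rewrite hm0.
have hm1 : m.-1 < m.+1 by apply: leq_ltn_trans (leq_pred m) (ltnSn m).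
have hm2 : m < m.+1 by [].
have -> : j = Ordinal hm2 by apply: val_inj.
rewrite (@is_desc_ord _ _ (Ordinal hm1) (Ordinal hm2)) /= ?prednK //.
have h1 : cp hmn A t (Ordinal hm2) = x0.
  apply/eqP; move: (cf_notin hmn t hA (i := Ordinal hm2) (leqnn _)).
  by rewrite -cpE // /A in_setC1 negbK.
have h2 : cp hmn A t (Ordinal hm1) != x0.
  have hlt : Ordinal hm1 < m by rewrite /= ltn_predL.
  move: (cf_in t hA (i := Ordinal hm1) hlt).
  by rewrite -cpE // /A in_setC1.
rewrite h1; move: h2; rewrite /x0; case: ifP => hmJ.
  by move=> h2; apply/eqP; rewrite lt0n.
move=> h2; apply/eqP/esym/negbTE; rewrite -leqNgt /=.
have := ltn_ord (cp hmn A t (Ordinal hm1)); rewrite ltnS leq_eqVlt => /orP [e|/ltnW //].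
by move: h2; rewrite (_ : cp hmn A t (Ordinal hm1) = ord_max) ?eqxx //; apply/val_inj/eqP.
Qed.
Lemma max_in (I : seq nat) : I != [::] -> \max_(i <- I) i \in I.
Proof.
elim: I => [//|a I IH] _; rewrite big_cons inE.
case: (eqVneq I [::]) => [->|hI]; first by rewrite big_nil maxn0 eqxx.
case: (leqP (\max_(i <- I) i) a) => h.
  by rewrite eqxx.
by rewrite IH ?orbT.
Qed.

Local Open Scope ring_scope.

Lemma falling_horner (R : comNzRingType) k n : (k <= n)%N ->
  (falling R k).[n%:R] = (n ^_ k)%:R.
Proof.
move=> hk; rewrite /falling horner_prod ffact_prod natr_prod.
apply: eq_bigr => i _; rewrite hornerXsubC natrB //.
exact: leq_trans (ltnW (ltn_ord i)) hk.
Qed.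

Lemma desc_poly_uniq (R : realFieldType) (I : seq nat) (p q : {poly R}) :
  is_descent_poly I p -> is_descent_poly I q -> p = q.
Proof.
move=> hp hq; apply/eqP; rewrite -subr_eq0; apply/negPn/negP => hne.
set M := (\max_(i <- I) i)%N.
pose rs := [seq ((M.+1 + i)%N)%:R : R | i <- iota 0 (size (p - q))].
suff H : (size rs < size (p - q)%R)%N by rewrite size_map size_iota ltnn in H.
apply: max_poly_roots hne _ _.
  apply/allP => x /mapP [i _ ->]; rewrite /root hornerD hornerN hp ?hq ?subrr //.
    by rewrite ltnS leq_addr.
  by rewrite ltnS leq_addr.
rewrite map_inj_uniq ?iota_uniq // => a b /eqP; rewrite eqr_nat eqn_add2l => /eqP.
by [].
Qed.

Lemma main_ind (R : realFieldType) N (I : seq nat) : (size I <= N)%N ->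
  uniq I -> all (fun k => (0 < k)%N) I ->
  exists p : {poly R}, exists c : nat -> R,
    is_descent_poly I p /\
    p = (c 0%N)%:P + \sum_(k <- I) c k *: falling R k /\
    (forall k : nat, k \in 0%N :: I -> 1 / (k`!)%:R <= `|c k| /\ `|c k| <= 1).
Proof.
elim: N I => [|N IH] I hs hu hpos.
  move: hs; rewrite leqn0 size_eq0 => /eqP ->.
  exists 1, (fun _ => 1); split; [|split].
  - by move=> n _; rewrite hornerC dc_nil.
  - by rewrite big_nil addr0.
  - by move=> k; rewrite inE => /eqP ->; rewrite fact0 normr1 divr1 lexx.
case: (eqVneq I [::]) => hI0.
  subst I; exists 1, (fun _ => 1); split; [|split].
  - by move=> n _; rewrite hornerC dc_nil.
  - by rewrite big_nil addr0.
  - by move=> k; rewrite inE => /eqP ->; rewrite fact0 normr1 divr1 lexx.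
set m := (\max_(i <- I) i)%N.
have hm : m \in I by exact: max_in.
have hle : forall k, k \in I -> (k <= m)%N by move=> k hk; exact: leq_bigmax_seq.
have hm0 : (0 < m)%N by exact: (allP hpos).
set J := rem m I.
have memJ j : (j \in J) = (j != m) && (j \in I) by rewrite (mem_rem_uniq m hu).
have hJs : (size J <= N)%N by rewrite size_rem // -ltnS (leq_trans _ hs) // prednK // lt0n size_eq0.
have hJu : uniq J by exact: rem_uniq.
have hJpos : all (fun k => (0 < k)%N) J by apply/allP => k /mem_rem /(allP hpos).
have [pJ [cJ [hpJ [epJ bJ]]]] := IH J hJs hJu hJpos.
have hJlt : forall j, j \in J -> (0 < j < m)%N.
  move=> j hj; rewrite (allP hJpos j hj) /=.
  by move: hj; rewrite memJ => /andP [h1 h2]; rewrite ltn_neqAle h1 hle.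
have hmaxJ : (\max_(i <- J) i <= m)%N.
  by apply/bigmax_leqP_seq => i hi _; move: (hJlt i hi) => /andP [_ /ltnW].
pose d : R := (descent_count J m)%:R.
pose F : R := (m`!)%:R.
have hF : F != 0 by rewrite pnatr_eq0 -lt0n fact_gt0.
have hF0 : 0 < F by rewrite ltr0n fact_gt0.
exists (d / F *: falling R m - pJ).
exists (fun k => if k == m then d / F else - cJ k).
split; [|split].
- move=> n hn.
  rewrite hornerD hornerN hornerZ falling_horner ?(ltnW hn) //.
  rewrite hpJ ?(leq_ltn_trans hmaxJ hn) //.
  have := dc_rec hu hm hle hn; rewrite -/J => hrec.
  have -> : descent_count I n = ('C(n, m) * descent_count J m - descent_count J n)%N.
    by rewrite -hrec addnK.
  rewrite natrB; last by rewrite -hrec leq_addl.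
  rewrite -bin_ffact natrM -/F -/d natrM -/d mulrCA divfK //.
- rewrite (perm_big _ (perm_to_rem hm)) big_cons eqxx -/J.
  rewrite eq_sym (negbTE (lt0n_neq0 hm0)).
  rewrite (eq_big_seq (fun k => - (cJ k *: falling R k))); last first.
    by move=> k hk /=; move: (hJlt k hk) => /andP [_ /ltn_eqF ->]; rewrite scaleNr.
  rewrite epJ sumrN polyCN.
  set S := \sum_(i <- J) cJ i *: falling R i.
  set X := d / F *: falling R m.
  by rewrite opprD addrCA addrA.
- move=> k hk; case: (eqVneq k m) => hkm.
    rewrite hkm ger0_norm ?divr_ge0 ?ler0n // -/F.
    split.
      apply: ler_wpM2r; first by rewrite invr_ge0 ler0n.
      by rewrite ler1n dc_gt0.
    by rewrite ler_pdivrMr // mul1r ler_nat dc_le.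
  rewrite normrN; apply: bJ.
  move: hk; rewrite !inE memJ hkm /=; done.
Qed.

Unset Implicit Arguments.
Theorem lemma4p12 (R : realFieldType) (I : seq nat)
    (hI : uniq I) (hpos : all (fun k => (0 < k)%N) I) :
  (exists p : {poly R}, is_descent_poly I p) /\
  (forall p : {poly R}, is_descent_poly I p ->
     exists c : nat -> R,
       p = (c 0%N)%:P + \sum_(k <- I) c k *: falling R k /\
       (forall k : nat, k \in 0%N :: I ->
          1 / (k`!)%:R <= `|c k| /\ `|c k| <= 1)).
Proof.
have [q [c [hq [e b]]]] := @main_ind R (size I) I (leqnn _) hI hpos.
split; first by exists q.
move=> p hp; exists c; split => //.
by rewrite (desc_poly_uniq hp hq).
Qed.
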